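(* Let $p>1$ and $0\le a<p-1$. For every nonnegative nonincreasing sequence $x=(x_n)_{n\ge1}$ with $\sum_{n=1}^\infty x_n^p n^a<\infty$, $$\|x\|_{\ell^p(n^a)}\;\le\;\frac{1}{\zeta(p-a)^{1/p}}\,\|Cx\|_{\ell^p(n^a)},$$ where $\zeta$ is the Riemann zeta function. Moreover, the constant $\zeta(p-a)^{-1/p}$ is optimal (it is attained, e.g., for the sequence $x=(1,0,0,\dots)$).
   Context: For $p>1$ and $a\in\mathbb R$, $\|x\|_{\ell^p(n^a)}=\bigl(\sum_{n=1}^\infty |x_n|^p n^a\bigr)^{1/p}$. The discrete Hardy (Cesàro) operator is $(Cx)_n=\frac1n\sum_{k=1}^n|x_k|$. *)

(* Defs.v *)
From Stdlib Require Import Reals.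
From Coquelicot Require Import Coquelicot.
Open Scope R_scope.

(* Sequences x = (x_n)_{n>=1} are encoded as x : nat -> R with
   x k standing for x_{k+1}. *)

(* Real power with the convention 0^y = 0 for nonpositive bases
   (only used with y > 0, where this agrees with the usual x^y, x >= 0). *)
Definition rpow (x y : R) : R := if Rlt_dec 0 x then Rpower x y else 0.

Definition wterm (p a : R) (x : nat -> R) (k : nat) : R :=
  rpow (Rabs (x k)) p * Rpower (INR (S k)) a.

Definition wnorm (p a : R) (x : nat -> R) : R :=
  rpow (Series (wterm p a x)) (/ p).

Definition cesaro (x : nat -> R) (k : nat) : R :=
  / INR (S k) * sum_f_R0 (fun j => Rabs (x j)) k.

Definition zeta (s : R) : R := Series (fun k => / Rpower (INR (S k)) s).

Definition nonneg_nonincr (x : nat -> R) : Prop :=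
  (forall k, 0 <= x k) /\ (forall k, x (S k) <= x k).

Definition e1 (k : nat) : R := match k with O => 1 | _ => 0 end.

(* Main.v *)
Require Import Defs.
From Stdlib Require Import Reals Lra Lia.
From Coquelicot Require Import Coquelicot.
Open Scope R_scope.

Fixpoint psum (f : nat -> R) (n : nat) : R :=
  match n with O => 0 | S j => psum f j + f j end.

Lemma psum_sum_f f n : psum f (S n) = sum_f_R0 f n.
Proof. induction n; simpl in *; [ring | rewrite <- IHn; reflexivity]. Qed.

Lemma psum_le f g n : (forall i, (i < n)%nat -> f i <= g i) -> psum f n <= psum g n.
Proof. induction n; intros H; simpl; [lra|].
  assert (psum f n <= psum g n) by (apply IHn; intros; apply H; lia).
  assert (f n <= g n) by (apply H; lia). lra. Qed.

Lemma psum_nonneg f n : (forall i, 0 <= f i) -> 0 <= psum f n.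
Proof. intros H; induction n; simpl; [lra|]. specialize (H n); lra. Qed.

Lemma psum_mono f m n : (forall i, 0 <= f i) -> (m <= n)%nat -> psum f m <= psum f n.
Proof. intros H Hmn; induction Hmn; [lra|]. simpl. specialize (H m0). lra. Qed.

Lemma psum_lin f g c n : psum (fun i => f i - c * g i) n = psum f n - c * psum g n.
Proof. induction n; simpl; [ring|]. rewrite IHn; ring. Qed.

Lemma psum_plus f g n : psum (fun i => f i + g i) n = psum f n + psum g n.
Proof. induction n; simpl; [ring|]. rewrite IHn; ring. Qed.

Lemma psum_scal f c n : psum (fun i => c * f i) n = c * psum f n.
Proof. induction n; simpl; [ring|]. rewrite IHn; ring. Qed.

Lemma psum_const c n : psum (fun _ => c) n = INR n * c.
Proof. induction n; simpl psum; [simpl; ring|]. rewrite IHn, S_INR; ring. Qed.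

Lemma psum_ext f g n : (forall i, f i = g i) -> psum f n = psum g n.
Proof. intros H; induction n; simpl; [ring|]. rewrite IHn, H; ring. Qed.

Lemma psum_lim f : ex_series f -> is_lim_seq (psum f) (Series f).
Proof. intros H. apply Series_correct in H.
  apply is_lim_seq_incr_1.
  apply is_lim_seq_ext with (sum_n f).
  { intros n. rewrite psum_sum_f, sum_n_Reals. reflexivity. }
  exact H. Qed.

Lemma lim_le u (l : R) c : (forall n, u n <= c) -> is_lim_seq u l -> l <= c.
Proof. intros H Hl.
  assert (Rbar_le l c). { eapply is_lim_seq_le; [exact H| exact Hl| apply is_lim_seq_const]. }
  exact H0. Qed.

Lemma lim_ge u (l : R) c M : (forall n, c <= u (n + M)%nat) -> is_lim_seq u l -> c <= l.
Proof. intros H Hl. apply (is_lim_seq_incr_n u M) in Hl.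
  assert (Rbar_le c l). { eapply is_lim_seq_le; [exact H| apply is_lim_seq_const | exact Hl]. }
  exact H0. Qed.

Lemma lim_le_from u (l : R) c M : (forall n, u (n + M)%nat <= c) -> is_lim_seq u l -> l <= c.
Proof. intros H Hl. apply (is_lim_seq_incr_n u M) in Hl. eapply lim_le; [exact H| exact Hl]. Qed.

Lemma psum_le_Series f n : (forall i, 0 <= f i) -> ex_series f -> psum f n <= Series f.
Proof. intros H He. apply (lim_ge (psum f) (Series f) (psum f n) n).
  - intros k. apply psum_mono; [exact H| lia].
  - apply psum_lim; exact He. Qed.

Lemma Series_nonneg f : (forall i, 0 <= f i) -> ex_series f -> 0 <= Series f.
Proof. intros H He. apply Rle_trans with (psum f 0); [simpl; lra|]. apply psum_le_Series; auto. Qed.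

Lemma ex_series_bounded f B : (forall i, 0 <= f i) -> (forall n, psum f n <= B) -> ex_series f.
Proof. intros H HB.
  destruct (growing_cv (fun n => psum f (S n))) as [l Hl].
  - intros n. simpl. specialize (H (S n)). simpl in H. lra.
  - exists B. intros r [i ->]. apply HB.
  - exists l. apply is_series_Reals. unfold infinite_sum.
    intros eps He. destruct (Hl eps He) as [N HN]. exists N. intros n Hn.
    rewrite <- psum_sum_f. apply HN; exact Hn. Qed.

Lemma Rpower_pos x y : 0 < Rpower x y.
Proof. unfold Rpower; apply exp_pos. Qed.

Lemma rpow_0 y : rpow 0 y = 0.
Proof. unfold rpow; destruct (Rlt_dec 0 0); [lra|auto]. Qed.

Lemma rpow_pos x y : 0 < x -> rpow x y = Rpower x y.
Proof. intros H; unfold rpow; destruct (Rlt_dec 0 x); [auto|lra]. Qed.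

Lemma rpow_nonneg x y : 0 <= rpow x y.
Proof. unfold rpow; destruct (Rlt_dec 0 x); [left; apply Rpower_pos|lra]. Qed.

Lemma rpow_le u v y : 0 <= y -> 0 <= u <= v -> rpow u y <= rpow v y.
Proof. intros Hy [Hu Huv]. destruct Hu as [Hu| <-].
  - rewrite !rpow_pos by lra. apply Rle_Rpower_l; lra.
  - rewrite rpow_0. apply rpow_nonneg. Qed.

Lemma rpow_mult u v y : 0 <= u -> 0 <= v -> rpow (u * v) y = rpow u y * rpow v y.
Proof. intros Hu Hv. destruct Hu as [Hu| <-]; [destruct Hv as [Hv| <-]|].
  - rewrite !rpow_pos; try nra. rewrite Rpower_mult_distr; auto.
  - rewrite Rmult_0_r, rpow_0; ring.
  - rewrite Rmult_0_l, rpow_0; ring. Qed.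

Lemma rpow_split u y z : 0 <= u -> rpow u (y + z) = rpow u y * rpow u z.
Proof. intros [Hu| <-]. - rewrite !rpow_pos by lra. apply Rpower_plus.
  - rewrite !rpow_0; ring. Qed.

Lemma rpow_1 u : 0 <= u -> rpow u 1 = u.
Proof. intros [Hu| <-]. - rewrite rpow_pos by lra. apply Rpower_1; auto. - apply rpow_0. Qed.

Lemma Rpower_1_base y : Rpower 1 y = 1.
Proof. unfold Rpower; rewrite ln_1, Rmult_0_r; apply exp_0. Qed.

Lemma Rpower_inv u y : 0 < u -> Rpower (/ u) y = / Rpower u y.
Proof. intros Hu. assert (Rpower u y * Rpower (/u) y = 1).
  { rewrite Rpower_mult_distr by (try apply Rinv_0_lt_compat; lra).
    rewrite Rinv_r by lra. apply Rpower_1_base. }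
  pose proof (Rpower_pos u y). field_simplify_eq; [|lra]. lra. Qed.

Lemma rpow_inv u y : 0 < u -> rpow (/ u) y = / Rpower u y.
Proof. intros Hu. rewrite rpow_pos by (apply Rinv_0_lt_compat; lra). apply Rpower_inv; auto. Qed.

Lemma deriv_shift q h t : 0 < t + h ->
  derivable_pt_lim (fun t => Rpower (t + h) q) t (q * Rpower (t + h) (q - 1)).
Proof. intros H.
  replace (q * Rpower (t + h) (q - 1)) with ((q * Rpower (t + h) (q - 1)) * (1 + 0)) by ring.
  apply (derivable_pt_lim_comp (fun t => t + h) (fun u => Rpower u q)).
  - apply derivable_pt_lim_plus; [apply derivable_pt_lim_id| apply derivable_pt_lim_const].
  - apply derivable_pt_lim_power; auto. Qed.

(* convexity: increments increase *)
Lemma incr_mono p h w u : 1 <= p -> 0 <= h -> 0 < w <= u ->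
  Rpower (w + h) p - Rpower w p <= Rpower (u + h) p - Rpower u p.
Proof. intros Hp Hh [Hw Hwu]. destruct Hwu as [Hwu| <-]; [|lra].
  set (g := fun t => Rpower (t + h) p - Rpower (t + 0) p).
  destruct (MVT_cor2 g (fun t => p * Rpower (t + h) (p - 1) - p * Rpower (t + 0) (p - 1)) w u Hwu)
    as [c [Hc Hcb]].
  - intros c Hc. unfold g. apply derivable_pt_lim_minus; apply deriv_shift; lra.
  - unfold g in Hc. rewrite !Rplus_0_r in Hc.
    assert (Rpower c (p - 1) <= Rpower (c + h) (p - 1)) by (apply Rle_Rpower_l; lra).
    assert (0 <= (p * Rpower (c + h) (p - 1) - p * Rpower c (p - 1)) * (u - w)).
    { apply Rmult_le_pos; nra. }
    lra. Qed.

Lemma incr_upper p u h : 1 <= p -> 0 <= u -> 0 <= h ->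
  rpow (u + h) p - rpow u p <= p * h * rpow (u + h) (p - 1).
Proof. intros Hp Hu Hh.
  destruct Hh as [Hh| <-].
  2:{ rewrite Rplus_0_r. pose proof (rpow_nonneg u (p-1)). lra. }
  destruct Hu as [Hu| <-].
  - rewrite !rpow_pos by lra.
    assert (Hlt : u < u + h) by lra.
    destruct (MVT_cor2 (fun t => Rpower (t + 0) p) (fun t => p * Rpower (t + 0) (p - 1)) u (u + h) Hlt)
      as [c [Hc Hcb]].
    + intros c Hc. apply deriv_shift; lra.
    + rewrite !Rplus_0_r in Hc. 
      assert (Rpower c (p - 1) <= Rpower (u + h) (p - 1)) by (apply Rle_Rpower_l; lra).
      replace (u + h - u) with h in Hc by ring. rewrite Hc. assert (0 <= p * h * (Rpower (u + h) (p - 1) - Rpower c (p - 1))) by (apply Rmult_le_pos; nra). lra.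
  - rewrite Rplus_0_l, rpow_0.
    replace p with (1 + (p - 1)) at 1 by ring. rewrite rpow_split, rpow_1 by lra.
    pose proof (rpow_nonneg h (p-1)). assert (0 <= (p - 1) * (h * rpow h (p - 1))) by (apply Rmult_le_pos; nra). lra. Qed.

Definition wz (s : R) (k : nat) : R := / Rpower (INR (S k)) s.
Definition gz (s : R) (k : nat) : R := Rpower (INR (S k)) (1 - s).

Lemma INR_S_pos k : 0 < INR (S k).
Proof. apply lt_0_INR; lia. Qed.

Lemma wz_pos s k : 0 < wz s k.
Proof. unfold wz; apply Rinv_0_lt_compat, Rpower_pos. Qed.

Lemma wz_anti s k j : 0 <= s -> (k <= j)%nat -> wz s j <= wz s k.
Proof. intros Hs Hkj. unfold wz. apply Rinv_le_contravar; [apply Rpower_pos|].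
  apply Rle_Rpower_l; [lra|]. split; [apply INR_S_pos|]. apply le_INR; lia. Qed.

Lemma wz_0 s : wz s 0 = 1.
Proof. unfold wz. simpl INR. rewrite Rpower_1_base. apply Rinv_1. Qed.

Lemma wz_tele s k : 1 < s -> wz s k <= Rpower 2 s / (s - 1) * (gz s k - gz s (S k)).
Proof. intros Hs. set (n := INR (S k)).
  assert (Hn : 1 <= n) by (unfold n; rewrite S_INR; pose proof (pos_INR k); lra).
  assert (Hlt : n < n + 1) by lra.
  destruct (MVT_cor2 (fun t => Rpower (t + 0) (1 - s)) (fun t => (1 - s) * Rpower (t + 0) (1 - s - 1)) n (n + 1) Hlt)
      as [c [Hc Hcb]].
  - intros c Hc. apply deriv_shift; lra.
  - rewrite !Rplus_0_r in Hc. replace (n + 1 - n) with 1 in Hc by ring.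
    replace (1 - s - 1) with (- s) in Hc by ring. rewrite Rpower_Ropp in Hc.
    assert (Hg : gz s k - gz s (S k) = (s - 1) * / Rpower c s).
    { unfold gz. fold n. replace (INR (S (S k))) with (n + 1) by (unfold n; rewrite (S_INR (S k)); ring). lra. }
    rewrite Hg. unfold wz. fold n.
    assert (Hc2 : Rpower c s <= Rpower 2 s * Rpower n s).
    { rewrite Rpower_mult_distr by lra. apply Rle_Rpower_l; lra. }
    pose proof (Rpower_pos c s). pose proof (Rpower_pos n s). pose proof (Rpower_pos 2 s).
    replace (Rpower 2 s / (s - 1) * ((s - 1) * / Rpower c s)) with (Rpower 2 s / Rpower c s) by (field; lra).
    apply Rle_trans with (Rpower 2 s / (Rpower 2 s * Rpower n s)).
    + right. field. lra.
    + unfold Rdiv. apply Rmult_le_compat_l; [lra|]. apply Rinv_le_contravar; lra. Qed.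

Lemma gz_pos s k : 0 < gz s k.
Proof. apply Rpower_pos. Qed.

Lemma psum_wz_tail s m n : 1 < s -> (m <= n)%nat ->
  psum (wz s) n - psum (wz s) m <= Rpower 2 s / (s - 1) * (gz s m - gz s n).
Proof. intros Hs Hmn. induction Hmn; [lra|]. simpl psum. pose proof (wz_tele s m0 Hs). lra. Qed.

Lemma ex_series_wz s : 1 < s -> ex_series (wz s).
Proof. intros Hs. apply ex_series_bounded with (Rpower 2 s / (s - 1) * gz s 0).
  - intros; left; apply wz_pos.
  - intros n. pose proof (psum_wz_tail s 0 n Hs ltac:(lia)). simpl psum in H.
    pose proof (gz_pos s n). assert (0 < Rpower 2 s / (s - 1)) by (apply Rdiv_lt_0_compat; [apply Rpower_pos|lra]).
    nra. Qed.

Lemma zeta_eq s : zeta s = Series (wz s).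
Proof. reflexivity. Qed.

Lemma zeta_ge1 s : 1 < s -> 1 <= zeta s.
Proof. intros Hs. rewrite zeta_eq. rewrite <- (wz_0 s). replace (wz s 0) with (psum (wz s) 1) by (simpl; ring).
  apply psum_le_Series; [intros; left; apply wz_pos | apply ex_series_wz; auto]. Qed.

Lemma swap_sum T D N :
  psum (fun n => (T n - T (S n)) * psum D (S n)) N = psum (fun i => D i * T i) N - T N * psum D N.
Proof. induction N; [simpl; ring|].
  change (psum (fun n => (T n - T (S n)) * psum D (S n)) (S N)) with
    (psum (fun n => (T n - T (S n)) * psum D (S n)) N + (T N - T (S N)) * psum D (S N)).
  rewrite IHN. simpl psum. ring. Qed.

Lemma abel_aux y e M : (forall k, 0 <= y k) -> (forall k, y (S k) <= y k) -> (forall m, 0 <= psum e m) ->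
  y M * psum e (S M) <= psum (fun i => y i * e i) (S M).
Proof. intros Hy Hd He. induction M.
  - simpl; lra.
  - change (psum (fun i => y i * e i) (S (S M))) with (psum (fun i => y i * e i) (S M) + y (S M) * e (S M)).
    change (psum e (S (S M))) with (psum e (S M) + e (S M)).
    specialize (He (S M)). specialize (Hd M).
    assert (y (S M) * psum e (S M) <= y M * psum e (S M)) by (apply Rmult_le_compat_r; lra).
    lra. Qed.

Lemma abel y e M : (forall k, 0 <= y k) -> (forall k, y (S k) <= y k) -> (forall m, 0 <= psum e m) ->
  0 <= psum (fun i => y i * e i) M.
Proof. intros Hy Hd He. destruct M; [simpl; lra|].
  eapply Rle_trans; [|apply abel_aux; auto]. apply Rmult_le_pos; auto. Qed.

Lemma block_sum w b m' : (forall k, w (S k) <= w k) ->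
  INR (S m') * w (b + m')%nat <= psum w (b + S m') - psum w b.
Proof. intros Hd. induction m'.
  - rewrite Nat.add_0_r, Nat.add_1_r. simpl psum. simpl INR. lra.
  - rewrite !Nat.add_succ_r in *.
    change (psum w (S (S (b + m')))) with (psum w (S (b + m')) + w (S (b + m'))).
    rewrite (S_INR (S m')). specialize (Hd (b + m')%nat).
    assert (INR (S m') * w (S (b + m')) <= INR (S m') * w (b + m')%nat) by (apply Rmult_le_compat_l; [apply pos_INR| lra]).
    lra. Qed.

Lemma blocks s m' J : 1 < s ->
  Rpower (INR (S m')) (1 - s) * (psum (wz s) (S J) - 1) <= psum (wz s) (S m' * S J) - psum (wz s) (S m').
Proof. intros Hs. set (m := S m'). induction J.
  - rewrite Nat.mul_1_r. simpl psum. rewrite wz_0. lra.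
  - replace (m * S (S J))%nat with (m * S J + S m')%nat by (unfold m; lia).
    pose proof (block_sum (wz s) (m * S J) m' (fun k => wz_anti s k (S k) ltac:(lra) ltac:(lia))).
    fold m in H.
    assert (E : INR m * wz s (m * S J + m')%nat = Rpower (INR m) (1 - s) * wz s (S J)).
    { unfold wz. replace (S (m * S J + m')) with (m * S (S J))%nat by (unfold m; lia).
      rewrite mult_INR. rewrite <- Rpower_mult_distr by (apply INR_S_pos || (unfold m; apply INR_S_pos)).
      replace (1 - s) with (1 + - s) by ring. rewrite Rpower_plus, Rpower_Ropp, Rpower_1 by (unfold m; apply INR_S_pos).
      pose proof (Rpower_pos (INR m) s). pose proof (Rpower_pos (INR (S (S J))) s). field. lra. }
    change (psum (wz s) (S (S J))) with (psum (wz s) (S J) + wz s (S J)). change (S m') with m. lra. Qed.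

Definition Tz s n := Series (wz s) - psum (wz s) n.

Lemma Tz_step s n : Tz s n - Tz s (S n) = wz s n.
Proof. unfold Tz; simpl; ring. Qed.

Lemma Tz_nonneg s n : 1 < s -> 0 <= Tz s n.
Proof. intros Hs. unfold Tz. pose proof (psum_le_Series (wz s) n (fun i => Rlt_le _ _ (wz_pos s i)) (ex_series_wz s Hs)). lra. Qed.

Lemma Tz_lim s : 1 < s -> is_lim_seq (Tz s) 0.
Proof. intros Hs. unfold Tz. replace 0 with (Series (wz s) - Series (wz s)) by ring.
  apply is_lim_seq_minus'; [apply is_lim_seq_const| apply psum_lim, ex_series_wz; auto]. Qed.

Lemma Tz_lower s m' : 1 < s -> Rpower (INR (S m')) (1 - s) * (zeta s - 1) <= Tz s (S m').
Proof. intros Hs. apply (lim_le (fun J => Rpower (INR (S m')) (1 - s) * (psum (wz s) (S J) - 1))).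
  - intros J. eapply Rle_trans; [apply blocks; auto|]. unfold Tz.
    pose proof (psum_le_Series (wz s) (S m' * S J) (fun i => Rlt_le _ _ (wz_pos s i)) (ex_series_wz s Hs)). lra.
  - apply is_lim_seq_scal_l with (lu := zeta s - 1). apply is_lim_seq_minus'; [|apply is_lim_seq_const].
    apply (is_lim_seq_incr_1 (psum (wz s))). rewrite zeta_eq. apply psum_lim, ex_series_wz; auto. Qed.

Definition Sx (x : nat -> R) k := sum_f_R0 x k.
Definition prevS (x : nat -> R) k := match k with O => 0 | S j => Sx x j end.

Lemma Sx_nonneg x k : (forall i, 0 <= x i) -> 0 <= Sx x k.
Proof. intros H. unfold Sx. rewrite <- psum_sum_f. apply psum_nonneg; auto. Qed.

Lemma prevS_nonneg x k : (forall i, 0 <= x i) -> 0 <= prevS x k.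
Proof. intros H. destruct k; simpl; [lra| apply Sx_nonneg; auto]. Qed.

Lemma Sx_step x k : Sx x k = prevS x k + x k.
Proof. destruct k; [unfold Sx; simpl; ring|]. unfold prevS, Sx. reflexivity. Qed.

Lemma x_anti x j k : (forall i, x (S i) <= x i) -> (j <= k)%nat -> x k <= x j.
Proof. intros H Hjk. induction Hjk; [lra|]. specialize (H m); lra. Qed.

Lemma Sx_ge x k : nonneg_nonincr x -> INR (S k) * x k <= Sx x k.
Proof. intros [H0 H1]. induction k.
  - unfold Sx; simpl; lra.
  - rewrite Sx_step. simpl prevS. rewrite S_INR. specialize (H1 k).
    assert (INR (S k) * x (S k) <= INR (S k) * x k) by (apply Rmult_le_compat_l; [apply pos_INR|lra]). lra. Qed.

Lemma cesaro_eq x k : (forall i, 0 <= x i) -> cesaro x k = / INR (S k) * Sx x k.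
Proof. intros H. unfold cesaro, Sx. f_equal. apply sum_eq. intros i _. apply Rabs_right. apply Rle_ge, H. Qed.

Lemma wterm_cesaro p a x k : (forall i, 0 <= x i) ->
  wterm p a (cesaro x) k = rpow (Sx x k) p * wz (p - a) k.
Proof. intros H. unfold wterm. rewrite cesaro_eq by auto.
  pose proof (INR_S_pos k). pose proof (Sx_nonneg x k H).
  rewrite Rabs_right by (apply Rle_ge, Rmult_le_pos; [left; apply Rinv_0_lt_compat; lra| lra]).
  rewrite rpow_mult by (try (left; apply Rinv_0_lt_compat); lra).
  rewrite rpow_inv by lra. unfold wz.
  replace p with ((p - a) + a) at 1 by ring. rewrite Rpower_plus.
  pose proof (Rpower_pos (INR (S k)) (p - a)). pose proof (Rpower_pos (INR (S k)) a). field. lra. Qed.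

Lemma wterm_x p a x k : (forall i, 0 <= x i) ->
  wterm p a x k = rpow (x k) p * Rpower (INR (S k)) a.
Proof. intros H. unfold wterm. rewrite Rabs_right; [reflexivity| apply Rle_ge, H]. Qed.

Lemma wterm_nonneg p a x k : 0 <= wterm p a x k.
Proof. unfold wterm. apply Rmult_le_pos; [apply rpow_nonneg| left; apply Rpower_pos]. Qed.

Lemma young p a xv S m d : 1 < p -> 0 <= xv -> 0 <= S -> 0 < m -> 0 < d ->
  xv * rpow S (p - 1) * Rpower m (1 - (p - a)) <=
  d * (rpow S p * / Rpower m (p - a)) + Rpower d (1 - p) * (rpow xv p * Rpower m a).
Proof. intros Hp Hx HS Hm Hd.
  pose proof (rpow_nonneg S (p - 1)). pose proof (rpow_nonneg S p). pose proof (rpow_nonneg xv p).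
  pose proof (Rpower_pos m (p - a)). pose proof (Rpower_pos m a). pose proof (Rpower_pos d (1 - p)).
  assert (Em : Rpower m (1 - (p - a)) = m * / Rpower m (p - a)).
  { replace (1 - (p - a)) with (1 + - (p - a)) by ring. rewrite Rpower_plus, Rpower_Ropp, Rpower_1; auto. }
  assert (ES : rpow S p = S * rpow S (p - 1)).
  { replace p with (1 + (p - 1)) at 1 by ring. rewrite rpow_split, rpow_1; auto. }
  assert (Ex : rpow xv p = xv * rpow xv (p - 1)).
  { replace p with (1 + (p - 1)) at 1 by ring. rewrite rpow_split, rpow_1; auto. }
  destruct (Rle_lt_dec (xv * m) (d * S)) as [Hc|Hc].
  - rewrite Em, ES.
    assert (0 <= Rpower d (1 - p) * (rpow xv p * Rpower m a)) by (apply Rmult_le_pos; nra).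
    assert (xv * m * (rpow S (p - 1) * / Rpower m (p - a)) <= d * S * (rpow S (p - 1) * / Rpower m (p - a))).
    { apply Rmult_le_compat_r; [|lra]. apply Rmult_le_pos; [lra| left; apply Rinv_0_lt_compat; lra]. }
    assert (0 <= d * (S * rpow S (p - 1) * / Rpower m (p - a))).
    { apply Rmult_le_pos; [lra|]. apply Rmult_le_pos; [nra| left; apply Rinv_0_lt_compat; lra]. }
    nra.
  - assert (HS2 : S <= xv * m * / d).
    { apply Rmult_le_reg_l with d; [lra|]. field_simplify; lra. }
    assert (Hr : rpow S (p - 1) <= rpow xv (p - 1) * Rpower m (p - 1) * Rpower d (1 - p)).
    { eapply Rle_trans; [apply rpow_le; [lra| split; [exact HS| exact HS2]]|].
      rewrite !rpow_mult by (try apply Rmult_le_pos; try (left; apply Rinv_0_lt_compat); lra).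
      rewrite (rpow_inv d), (rpow_pos m) by lra. rewrite <- Rpower_Ropp. replace (- (p - 1)) with (1 - p) by ring. lra. }
    assert (Hm2 : Rpower m (p - 1) * Rpower m (1 - (p - a)) = Rpower m a).
    { rewrite <- Rpower_plus. f_equal. ring. }
    assert (0 <= d * (rpow S p * / Rpower m (p - a))).
    { apply Rmult_le_pos; [lra|]. apply Rmult_le_pos; [lra| left; apply Rinv_0_lt_compat; lra]. }
    assert (xv * rpow S (p - 1) * Rpower m (1 - (p - a)) <=
            xv * (rpow xv (p - 1) * Rpower m (p - 1) * Rpower d (1 - p)) * Rpower m (1 - (p - a))).
    { apply Rmult_le_compat_r; [left; apply Rpower_pos|]. apply Rmult_le_compat_l; lra. }
    assert (xv * (rpow xv (p - 1) * Rpower m (p - 1) * Rpower d (1 - p)) * Rpower m (1 - (p - a))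
            = Rpower d (1 - p) * (rpow xv p * Rpower m a)).
    { rewrite Ex, <- Hm2. ring. }
    lra. Qed.

Definition Xd x p k := rpow (Sx x k) p - rpow (prevS x k) p.

Lemma psum_Xd x p n : psum (Xd x p) (S n) = rpow (Sx x n) p.
Proof. induction n.
  - change (psum (Xd x p) 1) with (0 + Xd x p 0). unfold Xd, prevS. rewrite rpow_0. ring.
  - change (psum (Xd x p) (S (S n))) with (psum (Xd x p) (S n) + Xd x p (S n)).
    rewrite IHn. unfold Xd. simpl prevS. ring. Qed.

Lemma Xd_nonneg x p k : 0 <= p -> (forall i, 0 <= x i) -> 0 <= Xd x p k.
Proof. intros Hp H. unfold Xd. assert (rpow (prevS x k) p <= rpow (Sx x k) p).
  { apply rpow_le; auto. split; [apply prevS_nonneg; auto|]. rewrite Sx_step. specialize (H k). lra. }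
  lra. Qed.

Lemma Xd_upper x p k : 1 <= p -> (forall i, 0 <= x i) -> Xd x p k <= p * x k * rpow (Sx x k) (p - 1).
Proof. intros Hp H. unfold Xd. rewrite Sx_step. apply incr_upper; auto. apply prevS_nonneg; auto. Qed.

Lemma hardy_bound p a x N d : 1 < p -> 0 <= a -> a < p - 1 -> nonneg_nonincr x -> 0 < d ->
  psum (wterm p a (cesaro x)) N <=
  p * (Rpower 2 (p - a) / (p - a - 1)) * (d * psum (wterm p a (cesaro x)) N + Rpower d (1 - p) * psum (wterm p a x) N).
Proof. intros Hp Ha0 Ha1 Hx Hd. pose proof Hx as [H0 H1]. set (s := p - a).
  assert (Hs : 1 < s) by (unfold s; lra).
  set (C := Rpower 2 s / (s - 1)).
  assert (HC : 0 < C) by (unfold C; apply Rdiv_lt_0_compat; [apply Rpower_pos| lra]).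
  set (Tg := fun k => C * gz s k).
  assert (Step1 : psum (wterm p a (cesaro x)) N <= psum (fun n => (Tg n - Tg (S n)) * psum (Xd x p) (S n)) N).
  { apply psum_le. intros i _. rewrite wterm_cesaro by auto. rewrite psum_Xd. fold s.
    rewrite Rmult_comm. apply Rmult_le_compat_r; [apply rpow_nonneg|].
    unfold Tg. pose proof (wz_tele s i Hs). fold C in H. lra. }
  rewrite swap_sum in Step1.
  assert (Step2 : psum (fun i => Xd x p i * Tg i) N - Tg N * psum (Xd x p) N <= psum (fun i => Xd x p i * Tg i) N).
  { assert (0 <= Tg N * psum (Xd x p) N); [|lra]. apply Rmult_le_pos.
    - unfold Tg. left. apply Rmult_lt_0_compat; [auto| apply gz_pos].
    - apply psum_nonneg. intros; apply Xd_nonneg; auto; lra. }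
  assert (Step3 : psum (fun i => Xd x p i * Tg i) N <=
     psum (fun i => p * C * (d * wterm p a (cesaro x) i + Rpower d (1 - p) * wterm p a x i)) N).
  { apply psum_le. intros i _. unfold Tg.
    rewrite wterm_cesaro, wterm_x by auto. fold s.
    assert (Hy := young p a (x i) (Sx x i) (INR (S i)) d Hp (H0 i) (Sx_nonneg x i H0) (INR_S_pos i) Hd).
    fold s in Hy. unfold gz.
    pose proof (Xd_upper x p i ltac:(lra) H0).
    pose proof (Xd_nonneg x p i ltac:(lra) H0).
    pose proof (Rpower_pos (INR (S i)) (1 - s)).
    assert (Xd x p i * (C * Rpower (INR (S i)) (1 - s)) <= p * x i * rpow (Sx x i) (p - 1) * (C * Rpower (INR (S i)) (1 - s))).
    { apply Rmult_le_compat_r; [apply Rmult_le_pos; lra| lra]. }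
    assert (p * x i * rpow (Sx x i) (p - 1) * (C * Rpower (INR (S i)) (1 - s)) = p * C * (x i * rpow (Sx x i) (p - 1) * Rpower (INR (S i)) (1 - s))) by ring.
    assert (p * C * (x i * rpow (Sx x i) (p - 1) * Rpower (INR (S i)) (1 - s)) <= p * C * (d * (rpow (Sx x i) p * / Rpower (INR (S i)) s) +
        Rpower d (1 - p) * (rpow (x i) p * Rpower (INR (S i)) a))).
    { apply Rmult_le_compat_l; [nra| exact Hy]. }
    unfold wz. lra. }
  rewrite psum_scal, psum_plus, !psum_scal in Step3.
  fold s C. lra. Qed.

Lemma hardy_ex p a x : 1 < p -> 0 <= a -> a < p - 1 -> nonneg_nonincr x ->
  ex_series (wterm p a x) -> ex_series (wterm p a (cesaro x)).
Proof. intros Hp Ha0 Ha1 Hx He.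
  set (C := Rpower 2 (p - a) / (p - a - 1)).
  assert (HC : 0 < C) by (unfold C; apply Rdiv_lt_0_compat; [apply Rpower_pos| lra]).
  set (d := / (2 * p * C)).
  assert (Hd : 0 < d) by (unfold d; apply Rinv_0_lt_compat; nra).
  apply ex_series_bounded with (2 * p * C * Rpower d (1 - p) * Series (wterm p a x)).
  - intros; apply wterm_nonneg.
  - intros n. pose proof (hardy_bound p a x n d Hp Ha0 Ha1 Hx Hd). fold C in H.
    pose proof (psum_le_Series (wterm p a x) n (wterm_nonneg p a x) He).
    pose proof (Rpower_pos d (1 - p)).
    assert (p * C * d = / 2) by (unfold d; field; lra).
    assert (p * C * Rpower d (1 - p) * psum (wterm p a x) n <= p * C * Rpower d (1 - p) * Series (wterm p a x)).
    { apply Rmult_le_compat_l; [|lra]. apply Rmult_le_pos; [nra| lra]. }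
    assert (p * C * (d * psum (wterm p a (cesaro x)) n + Rpower d (1 - p) * psum (wterm p a x) n) = (p * C * d) * psum (wterm p a (cesaro x)) n + p * C * Rpower d (1 - p) * psum (wterm p a x) n) by ring.
    assert (p * C * d * psum (wterm p a (cesaro x)) n = / 2 * psum (wterm p a (cesaro x)) n) by (rewrite H2; ring).
    lra. Qed.

Definition cc p k := rpow (INR (S k)) p - rpow (INR k) p.
Definition Dp x p k := rpow (x k) p * cc p k.

Lemma cc_nonneg p k : 0 <= p -> 0 <= cc p k.
Proof. intros Hp. unfold cc. assert (rpow (INR k) p <= rpow (INR (S k)) p); [|lra].
  apply rpow_le; auto. split; [apply pos_INR| apply le_INR; lia]. Qed.

Lemma Dp_nonneg x p k : 0 <= p -> 0 <= Dp x p k.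
Proof. intros Hp. unfold Dp. apply Rmult_le_pos; [apply rpow_nonneg| apply cc_nonneg; auto]. Qed.

Lemma lower_pt x p n : 1 <= p -> nonneg_nonincr x -> psum (Dp x p) (S n) <= rpow (Sx x n) p.
Proof. intros Hp Hx. pose proof Hx as [H0 H1]. induction n.
  - change (psum (Dp x p) 1) with (0 + Dp x p 0). unfold Dp, cc. simpl INR.
    rewrite rpow_0, (rpow_pos 1) by lra. rewrite Rpower_1_base. unfold Sx. simpl. lra.
  - change (psum (Dp x p) (S (S n))) with (psum (Dp x p) (S n) + Dp x p (S n)).
    assert (Dp x p (S n) <= rpow (Sx x (S n)) p - rpow (Sx x n) p); [|lra].
    rewrite Sx_step. change (prevS x (S n)) with (Sx x n).
    set (h := x (S n)). assert (Hh : 0 <= h) by apply H0.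
    destruct Hh as [Hh| Hh].
    2:{ unfold Dp. fold h. rewrite <- Hh, rpow_0, Rplus_0_r. lra. }
    pose proof (Sx_ge x n Hx). pose proof (H1 n). fold h in H2.
    pose proof (INR_S_pos n).
    assert (Hw : INR (S n) * h <= Sx x n).
    { assert (INR (S n) * h <= INR (S n) * x n) by (apply Rmult_le_compat_l; lra). lra. }
    assert (Hwp : 0 < INR (S n) * h) by nra.
    pose proof (incr_mono p h (INR (S n) * h) (Sx x n) Hp ltac:(lra) ltac:(lra)).
    rewrite !rpow_pos by lra.
    unfold Dp, cc. fold h. rewrite !rpow_pos by (try apply INR_S_pos; lra).
    replace (INR (S n) * h + h) with (INR (S (S n)) * h) in H4 by (rewrite (S_INR (S n)); ring).
    rewrite <- !Rpower_mult_distr in H4 by (try apply INR_S_pos; lra). lra. Qed.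

Lemma psum_mono2 f m n : (forall i, (i < n)%nat -> 0 <= f i) -> (m <= n)%nat -> psum f m <= psum f n.
Proof. intros H Hmn; induction Hmn; [lra|]. simpl. assert (0 <= f m0) by (apply H; lia).
  assert (psum f m <= psum f m0) by (apply IHHmn; intros; apply H; lia). lra. Qed.

Lemma Tz_anti s i N : 1 < s -> (i <= N)%nat -> Tz s N <= Tz s i.
Proof. intros Hs H. unfold Tz. pose proof (psum_mono (wz s) i N (fun k => Rlt_le _ _ (wz_pos s k)) H). lra. Qed.

Lemma lower_series p a x M : 1 < p -> 0 <= a -> a < p - 1 -> nonneg_nonincr x ->
  ex_series (wterm p a (cesaro x)) ->
  psum (fun i => Dp x p i * Tz (p - a) i) M <= Series (wterm p a (cesaro x)).
Proof. intros Hp Ha0 Ha1 Hx HY. pose proof Hx as [H0 H1]. set (s := p - a).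
  assert (Hs : 1 < s) by (unfold s; lra).
  set (Q := psum (fun i => Dp x p i * Tz s i) M).
  set (u := fun N => Q - Tz s N * psum (Dp x p) M).
  apply (lim_le_from u Q (Series (wterm p a (cesaro x))) M).
  2:{ assert (L : is_lim_seq u (Q - 0 * psum (Dp x p) M)).
      { apply is_lim_seq_minus'; [apply is_lim_seq_const|].
        apply is_lim_seq_mult'; [apply Tz_lim; auto| apply is_lim_seq_const]. }
      replace (Q - 0 * psum (Dp x p) M) with Q in L by ring. exact L. }
  intros n. set (N := (n + M)%nat).
  eapply Rle_trans; [|apply (psum_le_Series _ N (wterm_nonneg p a (cesaro x)) HY)].
  assert (E1 : psum (fun k => (Tz s k - Tz s (S k)) * psum (Dp x p) (S k)) N <= psum (wterm p a (cesaro x)) N).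
  { apply psum_le. intros k _. rewrite Tz_step, wterm_cesaro by auto. fold s.
    rewrite Rmult_comm. apply Rmult_le_compat_r; [left; apply wz_pos| apply lower_pt; auto; lra]. }
  rewrite swap_sum in E1.
  assert (E2 : psum (fun i => Dp x p i * Tz s i) N - Tz s N * psum (Dp x p) N =
               psum (fun i => Dp x p i * Tz s i - Tz s N * Dp x p i) N) by (rewrite psum_lin; ring).
  assert (E3 : psum (fun i => Dp x p i * Tz s i - Tz s N * Dp x p i) M <=
               psum (fun i => Dp x p i * Tz s i - Tz s N * Dp x p i) N).
  { apply psum_mono2; [|unfold N; lia]. intros i Hi.
    assert (Tz s N <= Tz s i) by (apply Tz_anti; auto; lia).
    pose proof (Dp_nonneg x p i ltac:(lra)). nra. }
  rewrite psum_lin in E3. unfold u, Q. fold N. lra. Qed.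

Definition Wa a m := psum (fun i => Rpower (INR (S i)) a) m.

Lemma ccT p a m : 1 < p - a ->
  psum (fun i => cc p i * Tz (p - a) i) m = Wa a m + rpow (INR m) p * Tz (p - a) m.
Proof. intros Hs. induction m.
  - simpl. rewrite rpow_0. unfold Wa; simpl. ring.
  - change (psum (fun i => cc p i * Tz (p - a) i) (S m)) with
      (psum (fun i => cc p i * Tz (p - a) i) m + cc p m * Tz (p - a) m).
    rewrite IHm. unfold Wa. change (psum (fun i => Rpower (INR (S i)) a) (S m)) with
      (psum (fun i => Rpower (INR (S i)) a) m + Rpower (INR (S m)) a).
    assert (Ew : rpow (INR (S m)) p * wz (p - a) m = Rpower (INR (S m)) a).
    { rewrite rpow_pos by apply INR_S_pos. unfold wz. replace p with ((p - a) + a) at 1 by ring.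
      rewrite Rpower_plus. pose proof (Rpower_pos (INR (S m)) (p - a)). field. lra. }
    pose proof (Tz_step (p - a) m). unfold cc. 
    replace (Tz (p - a) m) with (wz (p - a) m + Tz (p - a) (S m)) by lra.
    rewrite <- Ew. ring. Qed.

Lemma E_nonneg p a m : 1 < p -> 0 <= a -> a < p - 1 ->
  0 <= psum (fun i => cc p i * Tz (p - a) i - zeta (p - a) * Rpower (INR (S i)) a) m.
Proof. intros Hp Ha0 Ha1. assert (Hs : 1 < p - a) by lra.
  rewrite psum_lin, ccT by auto. fold (Wa a m).
  pose proof (zeta_ge1 (p - a) Hs).
  destruct m.
  - unfold Wa; simpl. rewrite rpow_0. lra.
  - pose proof (Tz_lower (p - a) m Hs).
    set (q := INR (S m)) in *. assert (Hq : 0 < q) by apply INR_S_pos.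
    assert (HW : Wa a (S m) <= q * Rpower q a).
    { unfold Wa. replace (q * Rpower q a) with (psum (fun _ => Rpower q a) (S m)) by (rewrite psum_const; reflexivity). apply psum_le. intros i Hi.
      apply Rle_Rpower_l; auto. split; [apply INR_S_pos| unfold q; apply le_INR; lia]. }
    rewrite rpow_pos by auto.
    assert (Hpw : Rpower q p * Rpower q (1 - (p - a)) = q * Rpower q a).
    { rewrite <- Rpower_plus. replace (p + (1 - (p - a))) with (1 + a) by ring.
      rewrite Rpower_plus, Rpower_1; auto. }
    pose proof (Rpower_pos q p). pose proof (Rpower_pos q a).
    assert (Rpower q p * (Rpower q (1 - (p - a)) * (zeta (p - a) - 1)) <= Rpower q p * Tz (p - a) (S m))
      by (apply Rmult_le_compat_l; lra).
    assert (Wa a (S m) * (zeta (p - a) - 1) <= q * Rpower q a * (zeta (p - a) - 1))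
      by (apply Rmult_le_compat_r; lra).
    assert (Rpower q p * (Rpower q (1 - (p - a)) * (zeta (p - a) - 1)) = q * Rpower q a * (zeta (p - a) - 1))
      by (rewrite <- Hpw; ring).
    nra. Qed.

Lemma main_ineq p a x : 1 < p -> 0 <= a -> a < p - 1 -> nonneg_nonincr x ->
  ex_series (wterm p a x) -> ex_series (wterm p a (cesaro x)) ->
  zeta (p - a) * Series (wterm p a x) <= Series (wterm p a (cesaro x)).
Proof. intros Hp Ha0 Ha1 Hx He HY. pose proof Hx as [H0 H1].
  apply (lim_le (fun M => zeta (p - a) * psum (wterm p a x) M)).
  2:{ apply is_lim_seq_scal_l with (lu := Series (wterm p a x)). apply psum_lim; auto. }
  intros M. eapply Rle_trans; [|apply (lower_series p a x M); auto].
  pose proof (abel (fun i => rpow (x i) p) (fun i => cc p i * Tz (p - a) i - zeta (p - a) * Rpower (INR (S i)) a) M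
    (fun k => rpow_nonneg _ _) (fun k => rpow_le (x (S k)) (x k) p ltac:(lra) (conj (H0 (S k)) (H1 k))) (fun m => E_nonneg p a m Hp Ha0 Ha1)).
  assert (psum (fun i => rpow (x i) p * (cc p i * Tz (p - a) i - zeta (p - a) * Rpower (INR (S i)) a)) M =
          psum (fun i => Dp x p i * Tz (p - a) i) M - zeta (p - a) * psum (wterm p a x) M).
  { rewrite <- psum_lin. apply psum_ext. intros i. rewrite wterm_x by auto. unfold Dp. ring. }
  lra. Qed.

Lemma e1_nn : nonneg_nonincr e1.
Proof. split; intros k; destruct k; simpl; try lra; destruct k; lra. Qed.

Lemma Sx_e1 k : Sx e1 k = 1.
Proof. induction k; [unfold Sx; simpl; reflexivity|]. rewrite Sx_step. change (prevS e1 (S k)) with (Sx e1 k). rewrite IHk. simpl. ring. Qed.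

Lemma wterm_e1_sum p a n : 0 < p -> sum_f_R0 (wterm p a e1) n = 1.
Proof. intros Hp. induction n.
  - simpl. rewrite wterm_x by (pose proof e1_nn as [H _]; exact H). simpl. rewrite (rpow_pos 1) by lra.
    rewrite !Rpower_1_base. ring.
  - simpl. rewrite IHn. rewrite wterm_x by (pose proof e1_nn as [H _]; exact H). simpl. rewrite rpow_0. ring. Qed.

Lemma is_series_e1 p a : 0 < p -> is_series (wterm p a e1) 1.
Proof. intros Hp. apply is_series_Reals. intros eps He. exists 0%nat. intros n _.
  rewrite wterm_e1_sum by auto. unfold R_dist. rewrite Rminus_diag, Rabs_R0. lra. Qed.

Lemma wterm_cesaro_e1 p a k : wterm p a (cesaro e1) k = wz (p - a) k.
Proof. rewrite wterm_cesaro by (pose proof e1_nn as [H _]; exact H). rewrite Sx_e1.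
  rewrite rpow_pos by lra. rewrite Rpower_1_base. ring. Qed.

Theorem theorem3p5 (p a : R) (hp : 1 < p) (ha0 : 0 <= a) (ha1 : a < p - 1) :
  (forall x : nat -> R,
     nonneg_nonincr x ->
     ex_series (wterm p a x) ->
     ex_series (wterm p a (cesaro x)) /\
     wnorm p a x <= / rpow (zeta (p - a)) (/ p) * wnorm p a (cesaro x))
  /\
  (nonneg_nonincr e1 /\ ex_series (wterm p a e1) /\
   wnorm p a e1 = / rpow (zeta (p - a)) (/ p) * wnorm p a (cesaro e1) /\
   wnorm p a e1 <> 0).
Proof.
  assert (Hz : 1 <= zeta (p - a)) by (apply zeta_ge1; lra).
  assert (Hr : 0 < rpow (zeta (p - a)) (/ p)) by (rewrite rpow_pos by lra; apply Rpower_pos).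
  split.
  - intros x Hx He. pose proof (hardy_ex p a x hp ha0 ha1 Hx He) as HY. split; [exact HY|].
    pose proof (main_ineq p a x hp ha0 ha1 Hx He HY).
    pose proof (Series_nonneg _ (wterm_nonneg p a x) He).
    unfold wnorm. set (r := rpow (zeta (p - a)) (/ p)) in *.
    assert (r * rpow (Series (wterm p a x)) (/ p) <= rpow (Series (wterm p a (cesaro x))) (/ p)).
    { unfold r. rewrite <- rpow_mult by lra. apply rpow_le.
      - left; apply Rinv_0_lt_compat; lra.
      - split; [apply Rmult_le_pos; lra| lra]. }
    replace (rpow (Series (wterm p a x)) (/ p)) with (/ r * (r * rpow (Series (wterm p a x)) (/ p))) by (field; lra).
    apply Rmult_le_compat_l; [left; apply Rinv_0_lt_compat; lra| lra].
  - assert (HS : Series (wterm p a e1) = 1) by (apply is_series_unique, is_series_e1; lra).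
    assert (HC : Series (wterm p a (cesaro e1)) = zeta (p - a)).
    { rewrite zeta_eq. apply Series_ext. intros; apply wterm_cesaro_e1. }
    assert (Hw1 : wnorm p a e1 = 1).
    { unfold wnorm. rewrite HS, rpow_pos, Rpower_1_base by lra. reflexivity. }
    split; [exact e1_nn|]. split; [exists 1; apply is_series_e1; lra|].
    split.
    + rewrite Hw1. unfold wnorm. rewrite HC. field. lra.
    + rewrite Hw1. lra.
Qed.
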